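(* Let $a,b\in\mathbb{R}$ with $0<a<b$, let $p,q>1$ with $\frac1p+\frac1q=1$, $s\in\left(0,\frac1q\right)$, and $\alpha,\lambda\in[0,1]$. Define $$C_s(\alpha,q)=(1-\alpha)\big[A_\alpha^{sq}(a,b)+a^{sq}\big],\qquad D_s(\alpha,q)=\alpha\big[A_\alpha^{sq}(a,b)+b^{sq}\big],$$ $$\varepsilon_1(\alpha,\lambda,p)=(\alpha\lambda)^{p+1}+(1-\alpha-\alpha\lambda)^{p+1},\qquad \varepsilon_2(\alpha,\lambda,p)=(\alpha\lambda)^{p+1}-(\alpha\lambda-1+\alpha)^{p+1}.$$ Then $$\left|\lambda A_\alpha(a^{s+1},b^{s+1})+(1-\lambda)A_\alpha^{s+1}(a,b)-L_{s+1}^{s+1}(a,b)\right|\leq (b-a)\left(\frac{1}{p+1}\right)^{1/p}(s+1)^{1-\frac1q}\cdot K,$$ where $K=\varepsilon_1^{1/p}(\alpha,\lambda,p)C_s^{1/q}(\alpha,q)+\varepsilon_1^{1/p}(1-\alpha,\lambda,p)D_s^{1/q}(\alpha,q)$ if $\alpha\lambda\leq 1-\alpha\leq 1-\lambda(1-\alpha)$; $K=\varepsilon_1^{1/p}(\alpha,\lambda,p)C_s^{1/q}(\alpha,q)+\varepsilon_2^{1/p}(1-\alpha,\lambda,p)D_s^{1/q}(\alpha,q)$ if $\alpha\lambda\leq 1-\lambda(1-\alpha)\leq 1-\alpha$; $K=\varepsilon_2^{1/p}(\alpha,\lambda,p)C_s^{1/q}(\alpha,q)+\varepsilon_1^{1/p}(1-\alpha,\lambda,p)D_s^{1/q}(\alpha,q)$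 if $1-\alpha\leq\alpha\lambda\leq 1-\lambda(1-\alpha)$.
   Context: For real $x,y$ and $\alpha\in[0,1]$, the weighted arithmetic mean is $A_\alpha(x,y)=\alpha x+(1-\alpha)y$, and $A_\alpha^{r}(x,y)$ denotes $(A_\alpha(x,y))^{r}$. For $x,y>0$, $x\neq y$, and $p\in\mathbb{R}\setminus\{-1,0\}$, the $p$-logarithmic mean is $L_p(x,y)=\left(\frac{y^{p+1}-x^{p+1}}{(p+1)(y-x)}\right)^{1/p}$, and $L_{s+1}^{s+1}$ denotes its $(s+1)$-th power. *)

(* Defs.v *)
From mathcomp Require Import all_boot all_order all_algebra.
From mathcomp Require Import all_classical all_reals all_analysis.
Set Implicit Arguments. Unset Strict Implicit. Unset Printing Implicit Defensive.
Import Order.TTheory GRing.Theory Num.Theory.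
Local Open Scope ring_scope.

Section Defs.
Variable R : realType.

Definition Amean (alpha x y : R) : R := alpha * x + (1 - alpha) * y.

Definition Lmean (p x y : R) : R :=
  ((y `^ (p + 1) - x `^ (p + 1)) / ((p + 1) * (y - x))) `^ (p^-1).

Definition Cs (a b s alpha q : R) : R :=
  (1 - alpha) * ((Amean alpha a b) `^ (s * q) + a `^ (s * q)).
Definition Ds (a b s alpha q : R) : R :=
  alpha * ((Amean alpha a b) `^ (s * q) + b `^ (s * q)).

Definition eps1 (alpha lambda p : R) : R :=
  (alpha * lambda) `^ (p + 1) + (1 - alpha - alpha * lambda) `^ (p + 1).
Definition eps2 (alpha lambda p : R) : R :=
  (alpha * lambda) `^ (p + 1) - (alpha * lambda - 1 + alpha) `^ (p + 1).

End Defs.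

(* Main.v *)
Require Import Defs.
From mathcomp Require Import all_boot all_order all_algebra.
From mathcomp Require Import all_classical all_reals all_analysis.
From mathcomp Require Import ring lra.
Import Order.TTheory GRing.Theory Num.Theory.
Import numFieldNormedType.Exports.
Local Open Scope classical_set_scope.
Local Open Scope ring_scope.

Section S.
Context {R : realType}.

Lemma cont_abs_sub (c : R) : continuous (fun t : R => `|t - c|).
Proof.
move=> x; apply: (@continuous_comp _ _ _ (fun t => t - c) (@Num.norm _ R)).
  by apply: cvgB; [exact: cvg_id| exact: cvg_cst].
exact: norm_continuous.
Qed.

Lemma cont_powR_gt0 (e y : R) : 0 < y -> {for y, continuous ((@powR R)^~ e)}.
Proof.
move=> y0; apply: differentiable_continuous; apply/derivable1_diffP.
by apply: derivable_powR; rewrite in_itv /= y0.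
Qed.

Lemma cont_powabs (c e : R) : 0 < e -> continuous (fun t => `|t - c| `^ e).
Proof.
move=> e0 x.
have [xc|xc] := eqVneq x c.
- rewrite xc /continuous_at subrr normr0 powR0 ?gt_eqF //.
  apply/cvgrPdist_lt => eps eps0.
  have d0 : 0 < eps `^ e^-1 by apply: powR_gt0.
  near=> t.
  rewrite sub0r normrN ger0_norm ?powR_ge0//.
  have -> : eps = (eps `^ e^-1) `^ e.
    by rewrite -powRrM mulVf ?gt_eqF// powRr1 // ltW.
  apply: gt0_ltr_powR; [exact: e0| by rewrite ?inE nnegrE| by rewrite ?inE nnegrE ltW|].
  near: t.
  have H := @cvgr_dist_lt _ _ _ _ _ (fun t : R => t) c (@cvg_id _ (nbhs c)) _ d0.
  near=> t.
  rewrite distrC.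
  near: t. exact: H.
- apply: (@continuous_comp _ _ _ (fun t => `|t - c|) ((@powR R)^~ e)).
    exact: cont_abs_sub.
  by apply: cont_powR_gt0; rewrite normr_gt0 subr_eq0.
Unshelve. all: end_near. Qed.


Lemma derive_powabs_gt (c k t : R) : c < t ->
  is_derive t 1 (fun x => `|x - c| `^ k) (k * (t - c) `^ (k - 1)).
Proof.
move=> ct.
apply: (@near_eq_is_derive _ _ _ (fun x => (x - c) `^ k)).
  near=> x; rewrite ger0_norm // subr_ge0 ltW //; near: x; exact: lt_nbhsr.
have H1 : is_derive (t - c) 1 ((@powR R)^~ k) (k * (t - c) `^ (k - 1)).
  by apply: is_derive1_powR; rewrite subr_gt0.
have H2 : is_derive t 1 (fun x : R => x - c) (1 - 0).
  exact: is_deriveB.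
rewrite subr0 in H2.
have := @is_derive1_comp R ((@powR R)^~ k) (fun x => x - c) t _ _ H1 H2.
by rewrite mulr1.
Unshelve. all: end_near. Qed.

Lemma derive_powabs_lt (c k t : R) : t < c ->
  is_derive t 1 (fun x => `|x - c| `^ k) (- (k * (c - t) `^ (k - 1))).
Proof.
move=> ct.
apply: (@near_eq_is_derive _ _ _ (fun x => (c - x) `^ k)).
  near=> x; rewrite distrC ger0_norm // subr_ge0 ltW //; near: x; exact: lt_nbhsl.
have H1 : is_derive (c - t) 1 ((@powR R)^~ k) (k * (c - t) `^ (k - 1)).
  by apply: is_derive1_powR; rewrite subr_gt0.
have H2 : is_derive t 1 (fun x : R => c - x) (0 - 1).
  exact: is_deriveB.
rewrite sub0r in H2.
have := @is_derive1_comp R ((@powR R)^~ k) (fun x => c - x) t _ _ H1 H2.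
by rewrite mulrN1.
Unshelve. all: end_near. Qed.

Notation mu := (@lebesgue_measure R).

Lemma FTC_R (f F : R -> R) (x0 x1 : R) : x0 < x1 ->
  {in `[x0, x1], continuous f} ->
  (forall t, x0 < t < x1 -> is_derive t 1 F (f t)) ->
  {for x0, continuous F} -> {for x1, continuous F} ->
  \int[mu]_(t in `[x0, x1]) f t = F x1 - F x0.
Proof.
move=> lt cf dF c0 c1.
rewrite /Rintegral (@continuous_FTC2 _ f F x0 x1 lt) //=.
- apply: continuous_in_subspaceT => t; rewrite inE /= => ht; exact: cf.
- split.
  + by move=> t; rewrite in_itv /= => /dF [].
  + exact: cvg_at_right_filter.
  + exact: cvg_at_left_filter.
- move=> t; rewrite in_itv/= => /dF H.
  by rewrite derive1E derive_val.
Qed.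


Lemma cont_scale_powabs (k c e : R) : 0 < e ->
  continuous (fun t => k * `|t - c| `^ e).
Proof.
move=> e0 x.
apply: (@continuousM _ _ (fun=> k) (fun t => `|t - c| `^ e)).
  exact: cvg_cst.
exact: cont_powabs.
Qed.

Lemma int_powabs_ge (c e x0 x1 : R) : 0 < e -> c <= x0 -> x0 <= x1 ->
  \int[mu]_(t in `[x0, x1]) `|t - c| `^ e =
  ((x1 - c) `^ (e + 1) - (x0 - c) `^ (e + 1)) / (e + 1).
Proof.
move=> e0 cx0; rewrite le_eqVlt => /predU1P[<-|lt].
  by rewrite set_itv1 Rintegral_set1 subrr mul0r.
have e10 : 0 < e + 1 by rewrite addr_gt0.
have -> : \int[mu]_(t in `[x0, x1]) `|t - c| `^ e =
   (fun t => (e + 1)^-1 * `|t - c| `^ (e + 1)) x1 - (fun t => (e + 1)^-1 * `|t - c| `^ (e + 1)) x0.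
  apply: (@FTC_R (fun t => `|t - c| `^ e) (fun t => (e + 1)^-1 * `|t - c| `^ (e + 1)) x0 x1 lt).
  - by move=> t _; apply: cont_powabs.
  - move=> t /andP[t0 t1].
    have ct : c < t by apply: le_lt_trans t0.
    have H := @derive_powabs_gt c (e + 1) t ct.
    have := is_deriveZ ((e + 1)^-1) H.
    rewrite /GRing.scale /= mulrA mulVf ?gt_eqF // mul1r addrK.
    by rewrite ger0_norm // subr_ge0 ltW.
  - by apply: cont_scale_powabs.
  - by apply: cont_scale_powabs.
rewrite /= !ger0_norm ?subr_ge0 //; last exact: (le_trans cx0 (ltW lt)).
by rewrite -mulrBr mulrC.
Qed.


Lemma int_powabs_le (c e x0 x1 : R) : 0 < e -> x1 <= c -> x0 <= x1 ->
  \int[mu]_(t in `[x0, x1]) `|t - c| `^ e =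
  ((c - x0) `^ (e + 1) - (c - x1) `^ (e + 1)) / (e + 1).
Proof.
move=> e0 cx1; rewrite le_eqVlt => /predU1P[<-|lt].
  by rewrite set_itv1 Rintegral_set1 subrr mul0r.
have e10 : 0 < e + 1 by rewrite addr_gt0.
have -> : \int[mu]_(t in `[x0, x1]) `|t - c| `^ e =
   (fun t => - (e + 1)^-1 * `|t - c| `^ (e + 1)) x1 - (fun t => - (e + 1)^-1 * `|t - c| `^ (e + 1)) x0.
  apply: (@FTC_R (fun t => `|t - c| `^ e) (fun t => - (e + 1)^-1 * `|t - c| `^ (e + 1)) x0 x1 lt).
  - by move=> t _; apply: cont_powabs.
  - move=> t /andP[t0 t1].
    have ct : t < c by apply: lt_le_trans cx1.
    have H := @derive_powabs_lt c (e + 1) t ct.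
    have := is_deriveZ (- (e + 1)^-1) H.
    rewrite /GRing.scale /= mulrNN mulrA mulVf ?gt_eqF // mul1r addrK.
    by rewrite distrC ger0_norm // subr_ge0 ltW.
  - by apply: cont_scale_powabs.
  - by apply: cont_scale_powabs.
rewrite /= ![`|_ - c|]distrC !ger0_norm ?subr_ge0 //; last exact: (le_trans (ltW lt) cx1).
ring.
Qed.

Lemma int_powabs_mid (c e x0 x1 : R) : 0 < e -> x0 <= c -> c <= x1 ->
  \int[mu]_(t in `[x0, x1]) `|t - c| `^ e =
  ((c - x0) `^ (e + 1) + (x1 - c) `^ (e + 1)) / (e + 1).
Proof.
move=> e0 x0c cx1.
have x01 : x0 <= x1 by apply: le_trans cx1.
have iab : mu.-integrable `[x0, x1] (EFin \o (fun t => `|t - c| `^ e)).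
  apply: continuous_compact_integrable; first exact: segment_compact.
  by apply: continuous_subspaceT; apply: cont_powabs.
have := @Rintegral_itvB R (fun t => `|t - c| `^ e) (BLeft x0) (BRight x1) c iab.
rewrite !bnd_simp => /(_ x0c cx1) H.
have -> : \int[mu]_(t in `[x0, x1]) `|t - c| `^ e =
  \int[mu]_(t in `[x0, c]) `|t - c| `^ e + \int[mu]_(t in `]c, x1]) `|t - c| `^ e.
  by rewrite -H addrC subrK.
rewrite Rintegral_itv_obnd_cbnd; last first.
  apply: integrableS iab => //; apply: subset_itvr; by rewrite bnd_simp.
rewrite int_powabs_le // int_powabs_ge //.
rewrite subrr powR0 ?gt_eqF ?addr_gt0 //.
ring.
Qed.


Lemma within_int (x0 x1 : R) (h : R -> R) :
  {within `[x0, x1], continuous h} -> mu.-integrable `[x0, x1] (EFin \o h).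
Proof.
by move=> ch; apply: continuous_compact_integrable => //; exact: segment_compact.
Qed.

Lemma Rint_EFin (x0 x1 : R) (h : R -> R) : {within `[x0, x1], continuous h} ->
  (\int[mu]_(t in `[x0, x1]) (h t)%:E)%E = (\int[mu]_(t in `[x0, x1]) h t)%:E.
Proof.
by move=> ch; rewrite fineK //; apply: integrable_fin_num => //; exact: within_int.
Qed.

Lemma cont_powabs0 (e : R) : 0 < e -> continuous (fun y : R => `|y| `^ e).
Proof.
move=> e0 x; have := @cont_powabs 0 e e0 x.
by under eq_fun do rewrite subr0.
Qed.

Lemma within_powabs (D : set R) (f : R -> R) (e : R) : 0 < e ->
  {within D, continuous f} -> {within D, continuous (fun t => `|f t| `^ e)}.
Proof.
move=> e0 cf x.
have := @continuous_comp (subspace D) R R f (fun y => `|y| `^ e) x (cf x) (@cont_powabs0 e e0 (f x)).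
by [].
Qed.

Lemma hoelder_itv (x0 x1 : R) (f g : R -> R) (p q : R) :
  {within `[x0, x1], continuous f} -> {within `[x0, x1], continuous g} ->
  0 < p -> 0 < q -> p^-1 + q^-1 = 1 ->
  `| \int[mu]_(t in `[x0, x1]) (f t * g t) | <=
   (\int[mu]_(t in `[x0, x1]) `|f t| `^ p) `^ p^-1 *
   (\int[mu]_(t in `[x0, x1]) `|g t| `^ q) `^ q^-1.
Proof.
move=> cf cg p0 q0 pq.
have mD : measurable (`[x0, x1] : set R) by [].
have cfg : {within `[x0, x1], continuous (fun t => f t * g t)}.
  by move=> x; apply: continuousM; [exact: cf|exact: cg].
have HH := (@le_normr_Rintegral _ _ _ mu _ (fun t => f t * g t) mD (within_int _ _ _ cfg)).
apply: (le_trans HH).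
rewrite -lee_fin -Rint_EFin; last first.
  move=> x.
  have := @continuous_comp (subspace `[x0, x1]) R R (fun t => f t * g t) (@Num.norm _ R) x (cfg x) (@norm_continuous _ R _).
  by [].
have mf : measurable_fun setT (f \_ `[x0, x1]).
  by apply/(measurable_restrictT _ _).1 => //; exact: measurable_realfun.subspace_continuous_measurable_fun.
have mg : measurable_fun setT (g \_ `[x0, x1]).
  by apply/(measurable_restrictT _ _).1 => //; exact: measurable_realfun.subspace_continuous_measurable_fun.
have H := hoelder mu mf mg p0 q0 pq.
rewrite Lnorm1 !Lnorm.unlock /= in H.
have E1 : (\int[mu]_x (`|(f \_ `[x0, x1]) x * (g \_ `[x0, x1]) x|)%:E)%E =
    (\int[mu]_(t in `[x0, x1]) (`|f t * g t|)%:E)%E.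
  rewrite [RHS]integral_mkcond; apply: eq_integral => x _.
  rewrite /patch /=; case: ifP => _ //.
  by rewrite mul0r normr0.
have Ep : forall (h : R -> R) (e : R), e != 0 ->
    (\int[mu]_x (`|(h \_ `[x0, x1]) x| `^ e)%:E)%E =
    (\int[mu]_(t in `[x0, x1]) (`|h t| `^ e)%:E)%E.
  move=> h e e0; rewrite [RHS]integral_mkcond; apply: eq_integral => x _.
  rewrite /patch /=; case: ifP => _ //.
  by rewrite normr0 powR0.
rewrite E1 (Ep f p) ?gt_eqF // (Ep g q) ?gt_eqF // in H.
rewrite (Rint_EFin _ _ _ (within_powabs _ _ _ p0 cf)) (Rint_EFin _ _ _ (within_powabs _ _ _ q0 cg)) in H.
by rewrite !poweR_EFin -EFinM in H.
Qed.

Lemma derive_aff (a h t : R) : is_derive t 1 (fun x : R => a + h * x) h.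
Proof.
have H0 := is_deriveD (is_derive_cst a t 1) (is_deriveZ h (is_derive_id t 1)).
have E : (cst a + h \*: id) = (fun x : R => a + h * x) by apply/funext.
rewrite E add0r /GRing.scale /= mulr1 in H0.
exact: H0.
Qed.

Lemma derive_phi (a h k t : R) : 0 < a + h * t ->
  is_derive t 1 (fun x => (a + h * x) `^ k) (k * (a + h * t) `^ (k - 1) * h).
Proof.
move=> u0.
have H1 := @is_derive1_powR R k _ u0.
have := @is_derive1_comp R ((@powR R)^~ k) (fun x => a + h * x) t _ _ H1 (derive_aff a h t).
by [].
Qed.

Lemma cont_sub (c : R) : continuous (fun t : R => t - c).
Proof. by move=> x; apply: cvgB; [exact: cvg_id| exact: cvg_cst]. Qed.

Lemma cont_gfun (s h c0 : R) : 0 < s ->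
  continuous (fun t : R => (s + 1) * (h `^ s * `|t - c0| `^ s)).
Proof.
move=> s0 x.
apply: (@continuousM _ _ (fun=> s + 1) (fun t => h `^ s * `|t - c0| `^ s)).
  exact: cvg_cst.
apply: (@continuousM _ _ (fun=> h `^ s) (fun t => `|t - c0| `^ s)).
  exact: cvg_cst.
exact: cont_powabs.
Qed.

Lemma cont_integrand (s h c0 c' : R) : 0 < s ->
  continuous (fun t : R => (t - c') * ((s + 1) * (h `^ s * `|t - c0| `^ s))).
Proof.
move=> s0 x.
apply: (@continuousM _ _ (fun t => t - c') (fun t => (s + 1) * (h `^ s * `|t - c0| `^ s))).
  exact: cont_sub.
exact: cont_gfun.
Qed.

Definition Gf (a h s c' x : R) : R :=
  h^-1 * ((x - c') * (a + h * x) `^ (s + 1)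
          - ((s + 1 + 1) * h)^-1 * (a + h * x) `^ (s + 1 + 1)).

Lemma derive_Gf (a h s c' c0 t : R) : 0 < h -> a + h * c0 = 0 -> c0 < t -> 0 < s ->
  is_derive t 1 (Gf a h s c') ((t - c') * ((s + 1) * (h `^ s * `|t - c0| `^ s))).
Proof.
move=> h0 hc0 ct s0.
have ut : a + h * t = h * (t - c0).
  have -> : a = - (h * c0) by rewrite -[a]subr0 -hc0; ring.
  ring.
have u0 : 0 < a + h * t by rewrite ut mulr_gt0 // subr_gt0.
have HP : is_derive t 1 (fun x : R => x - c') (1 - 0) by exact: is_deriveB.
have H1 := @derive_phi a h (s + 1) t u0.
have H2 := @derive_phi a h (s + 1 + 1) t u0.
have HM := is_deriveM HP H1.
have HZ := is_deriveZ (((s + 1 + 1) * h)^-1) H2.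
have HB := is_deriveB HM HZ.
have HG := is_deriveZ h^-1 HB.
have E : (h^-1 \*: ((fun x : R => x - c') * (fun x => (a + h * x) `^ (s + 1)) -
            ((s + 1 + 1) * h)^-1 \*: (fun x => (a + h * x) `^ (s + 1 + 1)))) = Gf a h s c'.
  by apply/funext.
rewrite E in HG.
apply: is_derive_eq HG _.
rewrite /GRing.scale /= !subr0 !addrK.
have -> : `|t - c0| = t - c0 by rewrite ger0_norm // subr_ge0 ltW.
rewrite ut powRM ?(ltW h0) ?subr_ge0 ?(ltW ct) //.
have e1 : (s + 1 + 1) != 0 by rewrite gt_eqF // !addr_gt0.
have e2 : h != 0 by rewrite gt_eqF.
have -> : (h * (t - c0)) `^ (s + 1) = h * (t - c0) * (h `^ s * (t - c0) `^ s).
  rewrite powRD; last by apply/implyP => _; rewrite mulf_neq0 // subr_eq0 gt_eqF.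
  rewrite powRr1; last by rewrite mulr_ge0 ?(ltW h0) // subr_ge0 ltW.
  by rewrite powRM ?(ltW h0) ?subr_ge0 ?(ltW ct) // mulrC.
field.
by rewrite e2 e1.
Qed.


Lemma Gf_cont (a h s c' c0 x : R) : 0 < h -> a + h * c0 = 0 -> c0 < x -> 0 < s ->
  {for x, continuous (Gf a h s c')}.
Proof.
move=> h0 hc0 cx s0.
have [D _] := @derive_Gf a h s c' c0 x h0 hc0 cx s0.
by apply/differentiable_continuous/derivable1_diffP.
Qed.

Lemma ident (a h s c' c0 x0 x1 : R) : 0 < h -> a + h * c0 = 0 -> c0 < x0 ->
  x0 <= x1 -> 0 < s ->
  \int[mu]_(t in `[x0, x1]) ((t - c') * ((s + 1) * (h `^ s * `|t - c0| `^ s))) =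
  Gf a h s c' x1 - Gf a h s c' x0.
Proof.
move=> h0 hc0 cx0; rewrite le_eqVlt => /predU1P[<-|lt] s0.
  by rewrite set_itv1 Rintegral_set1 subrr.
apply: (@FTC_R _ (Gf a h s c') x0 x1 lt).
- by move=> t _; apply: cont_integrand.
- move=> t /andP[t0 _]; apply: derive_Gf => //; exact: lt_trans t0.
- exact: (@Gf_cont a h s c' c0 x0 h0 hc0 cx0 s0).
- exact: (@Gf_cont a h s c' c0 x1 h0 hc0 (lt_trans cx0 lt) s0).
Qed.


Lemma keyVU (U V r : R) : 0 < V -> V <= U -> 0 < r -> r <= 1 ->
  V * U `^ r <= U * V `^ r.
Proof.
move=> V0 VU r0 r1.
have U0 : 0 < U by apply: lt_le_trans VU.
have split1 : forall W, 0 < W -> W = W `^ (1 - r) * W `^ r.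
  move=> W W0; rewrite -powRD; last by rewrite subrK oner_eq0.
  by rewrite subrK powRr1 // ltW.
rewrite {1}(split1 V V0) {2}(split1 U U0).
have -> : V `^ (1 - r) * V `^ r * U `^ r = V `^ (1 - r) * (V `^ r * U `^ r) by ring.
have -> : U `^ (1 - r) * U `^ r * V `^ r = U `^ (1 - r) * (V `^ r * U `^ r) by ring.
apply: ler_wpM2r; first by rewrite mulr_ge0 // powR_ge0.
apply: ge0_ler_powR; rewrite ?subr_ge0 // ?inE ?nnegrE ltW //.
Qed.

Lemma keyineq (U V r h : R) : 0 < V -> V <= U -> 0 < r -> r <= 1 -> 0 < h ->
  h `^ r * (U `^ (r + 1) - V `^ (r + 1)) <=
  (U - V) * ((h * V) `^ r + (h * U) `^ r).
Proof.
move=> V0 VU r0 r1 h0.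
have U0 : 0 < U by apply: lt_le_trans VU.
rewrite !powRM ?(ltW h0) ?(ltW U0) ?(ltW V0) //.
have pw : forall W, 0 < W -> W `^ (r + 1) = W * W `^ r.
  move=> W W0; rewrite powRD; last by apply/implyP => _; rewrite gt_eqF.
  by rewrite powRr1 ?(ltW W0) // mulrC.
rewrite !pw //.
have K := @keyVU U V r V0 VU r0 r1.
have hr := powR_ge0 h r.
have H2 : U * U `^ r - V * V `^ r <= (U - V) * (V `^ r + U `^ r).
  rewrite -subr_ge0.
  have -> : (U - V) * (V `^ r + U `^ r) - (U * U `^ r - V * V `^ r) =
            U * V `^ r - V * U `^ r by ring.
  by rewrite subr_ge0.
have -> : (U - V) * (h `^ r * V `^ r + h `^ r * U `^ r) =
          h `^ r * ((U - V) * (V `^ r + U `^ r)) by ring.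
exact: ler_wpM2l.
Qed.


Lemma piece (a h s p q c' c0 x0 x1 : R) :
  0 < h -> a + h * c0 = 0 -> c0 < x0 -> x0 <= x1 -> 0 < s -> 0 < p -> 1 < q ->
  p^-1 + q^-1 = 1 -> s * q <= 1 ->
  `| \int[mu]_(t in `[x0, x1]) ((t - c') * ((s + 1) * (h `^ s * `|t - c0| `^ s))) | <=
  (\int[mu]_(t in `[x0, x1]) `|t - c'| `^ p) `^ p^-1 * ((s + 1) `^ p^-1 *
  ((x1 - x0) * ((a + h * x0) `^ (s * q) + (a + h * x1) `^ (s * q))) `^ q^-1).
Proof.
move=> h0 hc0 cx0 x01 s0 p0 q1 pq sq1.
have q0 : 0 < q by apply: lt_trans q1.
have r0 : 0 < s * q by apply: mulr_gt0.
have sr : s <= s * q by apply: ler_peMr; [exact: ltW | exact: ltW].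
have s1 : 0 < s + 1 by apply: addr_gt0.
have cf : {within `[x0, x1], continuous (fun t : R => t - c')}.
  by apply: continuous_subspaceT; exact: cont_sub.
have cg : {within `[x0, x1], continuous (fun t => (s + 1) * (h `^ s * `|t - c0| `^ s))}.
  by apply: continuous_subspaceT; exact: cont_gfun.
have HO := @hoelder_itv x0 x1 (fun t => t - c')
   (fun t => (s + 1) * (h `^ s * `|t - c0| `^ s)) p q cf cg p0 q0 pq.
apply: (le_trans HO).
apply: ler_wpM2l; first exact: powR_ge0.
have Eg : \int[mu]_(t in `[x0, x1]) `|(s + 1) * (h `^ s * `|t - c0| `^ s)| `^ q =
   ((s + 1) `^ q * h `^ (s * q)) * \int[mu]_(t in `[x0, x1]) `|t - c0| `^ (s * q).
  rewrite -RintegralZl //; last first.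
    by apply: within_int; apply: continuous_subspaceT; apply: cont_powabs.
  apply: eq_Rintegral => t _.
  rewrite [`|(s + 1) * _|]ger0_norm; last by rewrite mulr_ge0 ?(ltW s1) // mulr_ge0 // powR_ge0.
  rewrite powRM ?(ltW s1) //; last by rewrite mulr_ge0 // powR_ge0.
  rewrite powRM ?powR_ge0 //.
  by rewrite -!powRrM mulrA.
rewrite Eg int_powabs_ge // ?(ltW cx0) //.
set U := x1 - c0; set V := x0 - c0.
have V0 : 0 < V by rewrite /V subr_gt0.
have VU : V <= U by rewrite /V /U lerD2r.
have u0 : a + h * x0 = h * V.
  have -> : a = - (h * c0) by rewrite -[a]subr0 -hc0; ring.
  rewrite /V; ring.
have u1 : a + h * x1 = h * U.
  have -> : a = - (h * c0) by rewrite -[a]subr0 -hc0; ring.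
  rewrite /U; ring.
have L : x1 - x0 = U - V by rewrite /U /V; ring.
rewrite u0 u1 L.
have key := @keyineq U V (s * q) h V0 VU r0 sq1 h0.
set X := h `^ (s * q) * (U `^ (s * q + 1) - V `^ (s * q + 1)).
have X0 : 0 <= X.
  rewrite /X mulr_ge0 ?powR_ge0 // subr_ge0.
  by apply: ge0_ler_powR; rewrite ?inE ?nnegrE ?(ltW V0) ?(le_trans (ltW V0) VU) // ltW // addr_gt0.
have r10 : 0 < s * q + 1 by apply: addr_gt0.
have -> : (s + 1) `^ q * h `^ (s * q) *
    ((U `^ (s * q + 1) - V `^ (s * q + 1)) / (s * q + 1)) =
    (s + 1) `^ (q - 1) * ((s + 1) * X / (s * q + 1)).
  rewrite /X.
  have -> : (s + 1) `^ q = (s + 1) `^ (q - 1) * (s + 1).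
    rewrite -{3}(powRr1 (ltW s1)) -powRD; first by rewrite subrK.
    by apply/implyP => _; rewrite gt_eqF.
  ring.
rewrite powRM; [|exact: powR_ge0| apply: divr_ge0; [apply: mulr_ge0 => //; exact: ltW | exact: ltW]].
rewrite -powRrM.
have -> : (q - 1) * q^-1 = p^-1.
  rewrite mulrBl mulfV ?gt_eqF // mul1r -pq; ring.
apply: ler_wpM2l; first exact: powR_ge0.
apply: ge0_ler_powR.
- by rewrite invr_ge0 ltW.
- rewrite ?inE nnegrE; apply: divr_ge0; [apply: mulr_ge0 => //; exact: ltW | exact: ltW].
- by rewrite ?inE nnegrE mulr_ge0 ?subr_ge0 // addr_ge0 // powR_ge0.
apply: le_trans key.
rewrite ler_pdivrMr // mulrC.
apply: ler_wpM2l => //.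
by rewrite lerD2r.
Qed.


Lemma main_gen (a b p q s alpha lambda E1 E2 : R) :
  0 < a -> a < b -> 1 < p -> 1 < q -> p^-1 + q^-1 = 1 ->
  0 < s -> s < q^-1 ->
  0 <= alpha <= 1 -> 0 <= lambda <= 1 ->
  \int[mu]_(t in `[0, 1 - alpha]) `|t - alpha * lambda| `^ p = E1 / (p + 1) ->
  \int[mu]_(t in `[1 - alpha, 1]) `|t - (1 - lambda * (1 - alpha))| `^ p = E2 / (p + 1) ->
  `| lambda * Amean alpha (a `^ (s + 1)) (b `^ (s + 1))
               + (1 - lambda) * (Amean alpha a b) `^ (s + 1)
               - (Lmean (s + 1) a b) `^ (s + 1) | <=
  (b - a) * ((p + 1)^-1) `^ (p^-1) * (s + 1) `^ (1 - q^-1) *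
  (E1 `^ (p^-1) * (Cs a b s alpha q) `^ (q^-1)
   + E2 `^ (p^-1) * (Ds a b s alpha q) `^ (q^-1)).
Proof.
move=> a0 ab p1 q1 pq s0 sq /andP[al0 al1] /andP[la0 la1] HE1 HE2.
set h := b - a.
have h0 : 0 < h by rewrite /h subr_gt0.
set c0 := - (a / h).
have hc0 : a + h * c0 = 0 by rewrite /c0; field; rewrite gt_eqF.
have c00 : c0 < 0 by rewrite /c0 oppr_lt0 divr_gt0.
have p0 : 0 < p by apply: lt_trans p1.
have q0 : 0 < q by apply: lt_trans q1.
have sq1 : s * q <= 1.
  have := sq; rewrite -(ltr_pM2r q0) mulVf ?gt_eqF // => /ltW; done.
have be0 : 0 <= 1 - alpha by rewrite subr_ge0.
have be1 : 1 - alpha <= 1 by rewrite lerBlDr lerDl.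
set mu1 := alpha * lambda.
set nu := 1 - lambda * (1 - alpha).
have P1 := @piece a h s p q mu1 c0 0 (1 - alpha) h0 hc0 c00 be0 s0 p0 q1 pq sq1.
have P2 := @piece a h s p q nu c0 (1 - alpha) 1 h0 hc0 (lt_le_trans c00 be0) be1 s0 p0 q1 pq sq1.
have Id1 := @ident a h s mu1 c0 0 (1 - alpha) h0 hc0 c00 be0 s0.
have Id2 := @ident a h s nu c0 (1 - alpha) 1 h0 hc0 (lt_le_trans c00 be0) be1 s0.
rewrite HE1 in P1; rewrite HE2 in P2.
set I1 := \int[mu]_(t in `[0, 1 - alpha]) _ in P1 Id1.
set I2 := \int[mu]_(t in `[1 - alpha, 1]) _ in P2 Id2.
have eA : a + h * (1 - alpha) = Amean alpha a b by rewrite /Amean /h; ring.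
have ea : a + h * 0 = a by rewrite mulr0 addr0.
have eb : a + h * 1 = b by rewrite mulr1 /h; ring.
rewrite ea eA in P1; rewrite eA eb in P2.
have T : lambda * Amean alpha (a `^ (s + 1)) (b `^ (s + 1))
               + (1 - lambda) * (Amean alpha a b) `^ (s + 1)
               - (Lmean (s + 1) a b) `^ (s + 1) = h * (I1 + I2).
  have s2 : 0 < s + 1 + 1 by rewrite !addr_gt0.
  have EL : Lmean (s + 1) a b `^ (s + 1) =
      (b `^ (s + 1 + 1) - a `^ (s + 1 + 1)) / ((s + 1 + 1) * h).
    rewrite /Lmean -powRrM mulVf ?gt_eqF ?addr_gt0 // powRr1 //.
    apply: divr_ge0; last by rewrite mulr_ge0 ?ltW.
    rewrite subr_ge0; apply: ge0_ler_powR; rewrite ?inE ?nnegrE ?ltW //.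
    exact: lt_trans ab.
  rewrite Id1 Id2 /Gf ea eA eb EL /Amean /mu1 /nu.
  field.
  by rewrite !gt_eqF.
rewrite T normrM (ger0_norm (ltW h0)).
apply: (le_trans (ler_wpM2l (ltW h0) (@ler_normD _ R I1 I2))).
apply: (le_trans (ler_wpM2l (ltW h0) (lerD P1 P2))).
have p10 : 0 < p + 1 by rewrite addr_gt0.
have Eg0 : forall E x0 x1 c, \int[mu]_(t in `[x0, x1]) `|t - c| `^ p = E / (p + 1) -> 0 <= E.
  move=> E x0 x1 c HE.
  have : 0 <= E / (p + 1) by rewrite -HE; apply: Rintegral_ge0 => t _; exact: powR_ge0.
  by rewrite pmulr_lge0 // invr_gt0.
have E10 := Eg0 _ _ _ _ HE1.
have E20 := Eg0 _ _ _ _ HE2.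
have pinv : 0 <= (p + 1)^-1 by rewrite invr_ge0 ltW.
rewrite (powRM _ E10 pinv) (powRM _ E20 pinv).
have -> : 1 - q^-1 = p^-1 by rewrite -pq; ring.
have -> : 1 - (1 - alpha) = alpha by ring.
rewrite /Cs /Ds [_ `^ (s * q) + a `^ (s * q)]addrC.
rewrite subr0 le_eqVlt; apply/orP; left; apply/eqP.
ring.
Qed.

End S.

Local Close Scope classical_set_scope.

Theorem mainTheorem8 (R : realType) (a b p q s alpha lambda : R) :
  0 < a -> a < b -> 1 < p -> 1 < q -> p^-1 + q^-1 = 1 ->
  0 < s -> s < q^-1 ->
  0 <= alpha <= 1 -> 0 <= lambda <= 1 ->
  let lhs := `| lambda * Amean alpha (a `^ (s + 1)) (b `^ (s + 1))
               + (1 - lambda) * (Amean alpha a b) `^ (s + 1)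
               - (Lmean (s + 1) a b) `^ (s + 1) | in
  let c := (b - a) * ((p + 1)^-1) `^ (p^-1) * (s + 1) `^ (1 - q^-1) in
  let C := (Cs a b s alpha q) `^ (q^-1) in
  let D := (Ds a b s alpha q) `^ (q^-1) in
  [/\ (alpha * lambda <= 1 - alpha -> 1 - alpha <= 1 - lambda * (1 - alpha) ->
        lhs <= c * ((eps1 alpha lambda p) `^ (p^-1) * C
                    + (eps1 (1 - alpha) lambda p) `^ (p^-1) * D)),
      (alpha * lambda <= 1 - lambda * (1 - alpha) -> 1 - lambda * (1 - alpha) <= 1 - alpha ->
        lhs <= c * ((eps1 alpha lambda p) `^ (p^-1) * C
                    + (eps2 (1 - alpha) lambda p) `^ (p^-1) * D)) &
      (1 - alpha <= alpha * lambda -> alpha * lambda <= 1 - lambda * (1 - alpha) ->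
        lhs <= c * ((eps2 alpha lambda p) `^ (p^-1) * C
                    + (eps1 (1 - alpha) lambda p) `^ (p^-1) * D))].
Proof.
move=> a0 ab p1 q1 pq s0 sq hal hla lhs c C D.
have /andP[al0 al1] := hal.
have /andP[la0 la1] := hla.
have p0 : 0 < p by apply: lt_trans p1.
have mu0 : 0 <= alpha * lambda by apply: mulr_ge0.
have nu1 : 1 - lambda * (1 - alpha) <= 1.
  by rewrite lerBlDr lerDl mulr_ge0 // subr_ge0.
have e1 : 1 - lambda * (1 - alpha) - (1 - alpha) = 1 - (1 - alpha) - (1 - alpha) * lambda by ring.
have e2 : 1 - (1 - lambda * (1 - alpha)) = (1 - alpha) * lambda by ring.
have e3 : 1 - alpha - (1 - lambda * (1 - alpha)) = (1 - alpha) * lambda - 1 + (1 - alpha) by ring.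
have e4 : alpha * lambda - (1 - alpha) = alpha * lambda - 1 + alpha by ring.
rewrite /lhs /c /C /D.
have be0 : 0 <= 1 - alpha by rewrite subr_ge0.
have be1 : 1 - alpha <= 1 by rewrite lerBlDr lerDl.
split => H1 H2; apply: main_gen => //.
- rewrite int_powabs_mid // subr0 /eps1 //.
- rewrite int_powabs_mid // e1 e2 /eps1 addrC //.
- have mb := le_trans H1 H2; rewrite int_powabs_mid // subr0 /eps1 //.
- rewrite int_powabs_ge // e2 e3 /eps2 //.
- rewrite int_powabs_le // subr0 e4 /eps2 //.
- have bn := le_trans H1 H2; rewrite int_powabs_mid // e1 e2 /eps1 addrC //.
Qed.
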